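(* Let $X$ be a compact metric space and $f\colon X\to X$ a positively $n$-expansive homeomorphism. Then the non-wandering set $\Omega(f)$ is finite if and only if $X$ is finite.
   Context: $f$ is positively $n$-expansive if there exists $c>0$ such that for every $x\in X$ the set $W^s_c(x)=\{y: d(f^k(y),f^k(x))\leq c \ \forall k\geq0\}$ has at most $n$ points. A point $x$ is non-wandering if for every open $U\ni x$ there is $k>0$ with $f^k(U)\cap U\neq\emptyset$; $\Omega(f)$ is the set of non-wandering points. *)

(* Defs.v *)
From HB Require Import structures.
From mathcomp Require Import all_boot all_order all_algebra.
From mathcomp Require Import all_classical all_reals all_analysis.
Set Implicit Arguments. Unset Strict Implicit. Unset Printing Implicit Defensive.
Import Order.TTheory GRing.Theory Num.Theory.
Local Open Scope classical_set_scope.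
Local Open Scope ring_scope.

Definition homeomorphism (T : topologicalType) (f : T -> T) : Prop :=
  exists g : T -> T, [/\ cancel f g, cancel g f, continuous f & continuous g].

Definition stable_set (R : realType) (X : metricType R) (f : X -> X) (c : R) (x : X)
  : set X :=
  [set y | forall k : nat, mdist (iter k f y) (iter k f x) <= c].

Definition at_most_n_points (T : eqType) (n : nat) (A : set T) : Prop :=
  forall s : seq T, uniq s -> (forall y, y \in s -> A y) -> (size s <= n)%N.

Definition pos_n_expansive (R : realType) (X : metricType R) (n : nat) (f : X -> X)
  : Prop :=
  exists2 c : R, 0 < c & forall x : X, at_most_n_points n (stable_set f c x).

Definition nonwandering (T : topologicalType) (f : T -> T) (x : T) : Prop :=
  forall U : set T, open U -> U x ->
    exists2 k : nat, (0 < k)%N & (iter k f @` U) `&` U !=set0.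

Definition Omega (T : topologicalType) (f : T -> T) : set T := [set x | nonwandering f x].

(* Main.v *)
Require Import Defs.
From HB Require Import structures.
From mathcomp Require Import all_boot all_order all_algebra.
From mathcomp Require Import all_classical all_reals all_analysis.
From mathcomp Require Import finmap.
Import Order.TTheory GRing.Theory Num.Theory.
Local Open Scope classical_set_scope.
Local Open Scope ring_scope.

Lemma fin_pos (R : realType) (A : eqType) (s : seq A) (P : A -> R -> Prop) :
  (forall a, a \in s -> exists2 e, 0 < e & forall e', 0 < e' -> e' <= e -> P a e') ->
  exists2 e, 0 < e & forall a, a \in s -> forall e', 0 < e' -> e' <= e -> P a e'.
Proof.
elim: s => [|a s IH] H; first by exists 1 => // a; rewrite in_nil.
have [e1 e10 H1] := H a (mem_head _ _).
have [e2 e20 H2] := IH (fun b (bs : b \in s) => H b (ltac:(by rewrite in_cons bs orbT))).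
exists (Order.min e1 e2); first by rewrite lt_min e10 e20.
move=> b; rewrite in_cons => /orP[/eqP->|bs] e' e'0; rewrite le_min => /andP[h1 h2].
  exact: H1.
exact: H2.
Qed.

Lemma amn_finite (T : choiceType) n (A : set T) : at_most_n_points n A -> finite_set A.
Proof.
move=> H; apply: contrapT => inf.
have [B BA Bn] := infinite_set_fset n.+1 inf.
have := H (enum_fset B) (fset_uniq B) (fun y yB => BA y yB).
rewrite leqNgt; move/negP; apply; exact: Bn.
Qed.

Lemma iter_inj (T : Type) (f : T -> T) k : injective f -> injective (iter k f).
Proof. by move=> fi; elim: k => [|k IH] x y //= /fi /IH. Qed.

Lemma omega_inv (R : realType) (X : metricType R) (f : X -> X) y :
  homeomorphism f -> Omega f y -> Omega f (f y).
Proof.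
move=> [g [fg gf cf cg]] Hy U oU Ufy.
have oV : open (f @^-1` U) by apply: open_comp => // z _; apply: cf.
have [k k0 [z [[w Vw <-] Vz]]] := Hy _ oV Ufy.
exists k => //; exists (f (iter k f w)); split => //.
by exists (f w) => //; rewrite -iterSr iterS.
Qed.

Lemma periodic_omega (T : topologicalType) (f : T -> T) x k :
  (0 < k)%N -> iter k f x = x -> Omega f x.
Proof. by move=> k0 e U oU Ux; exists k => //; exists x; split => //; exists x. Qed.

Lemma eventually_near (R : realType) (X : metricType R) (f : X -> X) (s : seq X) (x : X) (eta : R) :
  compact [set: X] -> Omega f `<=` [set` s] -> 0 < eta ->
  exists K, forall k, (K <= k)%N -> exists2 q, q \in s & mdist (iter k f x) q < eta.
Proof.
move=> cpt Os eta0; apply: contrapT => H.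
pose Bad k := forall q, q \in s -> eta <= mdist (iter k f x) q.
have Hb : forall K, exists k, (K <= k)%N /\ Bad k.
  move=> K; apply: contrapT => HK; apply: H; exists K => k Kk.
  apply: contrapT => Hq; apply: HK; exists k; split => // q qs.
  rewrite leNgt; apply/negP => lt; apply: Hq; by exists q.
pose B N := [set iter k f x | k in [set k | (N <= k)%N /\ Bad k]].
pose G := filter_from [set: nat] B.
have FG : Filter G.
  apply: filter_from_filter; first by exists 0%N.
  move=> i j _ _; exists (maxn i j) => // z [k [ik bk] <-].
  by split; exists k => //; split => //; apply: leq_trans ik; rewrite ?leq_maxl ?leq_maxr.
have PG : ProperFilter G.
  apply: filter_from_proper => i _; have [k [ik bk]] := Hb i.
  by exists (iter k f x); exists k.
have [y [_ cy]] := cpt G PG (ltac:(by exists 0%N)).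
have Oy : Omega f y.
  move=> U oU Uy.
  have nU : nbhs y U by apply: open_nbhs_nbhs; split.
  have [_ [[k1 [_ b1] <-] U1]] := cy (B 0%N) U (ltac:(by exists 0%N)) nU.
  have [_ [[k2 [k12 b2] <-] U2]] := cy (B k1.+1) U (ltac:(by exists k1.+1)) nU.
  exists (k2 - k1)%N; first by rewrite subn_gt0.
  exists (iter k2 f x); split => //; exists (iter k1 f x) => //.
  by rewrite -iterD subnK // ltnW.
have ys := Os _ Oy.
have [_ [[k [_ bk] <-] Bk]] := cy (B 0%N) (ball y eta) (ltac:(by exists 0%N)) (nbhsx_ballx _ _ eta0).
move: Bk; rewrite ballEmdist /= metric_sym => Bk.
by have := bk y ys; rewrite leNgt Bk.
Qed.

Theorem lemma2p4 (R : realType) (X : metricType R) (n : nat) (f : X -> X) :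
  compact [set: X] -> homeomorphism f -> pos_n_expansive n f ->
  (finite_set (Omega f) <-> finite_set [set: X]).
Proof.
move=> cpt hf [c c0 Hc]; split; last by move=> fX; apply: sub_finite_set fX.
move=> /finite_seqP[s Es].
have sinv : forall q, q \in s -> f q \in s.
  move=> q qs; have : Omega f q by rewrite Es.
  by move=> /(@omega_inv _ _ f q hf); rewrite Es.
have [e0 e00 Hsep] : exists2 e0 : R, 0 < e0 & forall q, q \in s -> forall e', 0 < e' -> e' <= e0 ->
    forall q', q' \in s -> mdist q q' < e' -> q = q'.
  apply: fin_pos => q qs.
  have [e e0 He] : exists2 e : R, 0 < e & forall q', q' \in s -> forall e', 0 < e' -> e' <= e ->
      mdist q q' < e' -> q = q'.
    apply: fin_pos => q' _.
    case: (eqVneq q q') => [-> | nqq]; first by exists 1.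
    exists (mdist q q'); first by rewrite mdist_gt0.
    by move=> e' _ e'le lt; move: (lt_le_trans lt e'le); rewrite ltxx.
  by exists e => // e' e'0 e'le q' q's; apply: He.
pose eps := Order.min c (e0 / 2).
have eps0 : 0 < eps by rewrite lt_min c0 divr_gt0.
have [g [fg gf cf cg]] := hf.
have [e1 e10 Hcont] : exists2 e1 : R, 0 < e1 & forall q, q \in s -> forall e', 0 < e' -> e' <= e1 ->
    forall y, mdist q y < e' -> mdist (f q) (f y) < eps.
  apply: fin_pos => q _.
  have Hn : \forall t \near q, mdist (f q) (f t) < eps.
    exact: (@metricType_numDomainType.cvgr_dist_lt _ _ _ _ _ f (f q) (cf q) _ eps0).
  move: Hn => /metricType_numDomainType.nbhs_mdistP [e e0' He].
  exists e => // e' _ e'le y lt; apply: (He y); exact: lt_le_trans lt e'le.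
pose eta := Order.min e1 eps.
have eta0 : 0 < eta by rewrite lt_min e10 eps0.
have etae1 : eta <= e1 by rewrite ge_min lexx.
have etaeps : eta <= eps by rewrite ge_min lexx orbT.
have epsc : eps <= c by rewrite ge_min lexx.
have epse0 : eps + eps <= e0.
  apply: (@le_trans _ _ (e0 / 2 + e0 / 2)); first by apply: lerD; rewrite ge_min lexx orbT.
  by rewrite -splitr.
apply: (@sub_finite_set _ _ [set` s]); last exact: finite_seq.
move=> x _.
have Os : Omega f `<=` [set` s] by rewrite Es.
have [K HK] := @eventually_near R X f s x eta cpt Os eta0.
have [q qs dq] := HK K (leqnn K).
have track : forall j, iter j f q \in s /\ mdist (iter (K + j) f x) (iter j f q) < eta.
  elim => [|j [ps dp]]; first by rewrite addn0.
  have [q' q's dq'] := HK (K + j.+1)%N (leq_addr _ _).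
  have h1 : mdist (f (iter j f q)) (f (iter (K + j) f x)) < eps.
    by apply: (Hcont _ ps eta) => //; rewrite metric_sym.
  have fps := sinv _ ps.
  have eq : f (iter j f q) = q'.
    apply: (Hsep _ fps (eps + eps)) => //; first by rewrite addr_gt0.
    apply: (le_lt_trans (metric_triangle _ (iter (K + j.+1) f x) _)).
    apply: ltrD; first by rewrite addnS iterS.
    exact: lt_le_trans dq' etaeps.
  by rewrite iterS eq; split => //; rewrite -eq -iterS.
pose h m := iter (K + m) f x.
have hstab : forall m, stable_set f c (iter m f q) (h m).
  move=> m k; rewrite /h -!iterD addnCA.
  have [_ d] := track (k + m)%N.
  by apply: ltW; apply: (lt_le_trans d); apply: le_trans etaeps epsc.
have finU : finite_set (\bigcup_(p in [set` s]) stable_set f c p).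
  apply: bigcup_finite; first exact: finite_seq.
  by move=> p _; apply: amn_finite; apply: Hc.
have [m1 [m2 [hm m12]]] : exists m1 m2, h m1 = h m2 /\ (m1 < m2)%N.
  apply: contrapT => Hn.
  have hinj : {in [set: nat] &, injective h}.
    move=> a b _ _ hab; apply/eqP; apply: contrapT => /negP nab.
    case: (ltngtP a b) nab => // ab _.
      by apply: Hn; exists a, b.
    by apply: Hn; exists b, a.
  apply: infinite_nat; rewrite -(eq_finite_set (inj_card_eq hinj)).
  apply: sub_finite_set finU => _ [m _ <-].
  exists (iter m f q); first by have [] := track m.
  exact: hstab.
have fi : injective f := can_inj fg.
apply: Os; apply: (@periodic_omega _ f x (m2 - m1)); first by rewrite subn_gt0.
apply: (@iter_inj _ f (K + m1) fi).
move: hm; rewrite /h => ->.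
by rewrite -iterD -addnA subnKC // ltnW.
Qed.
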